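(* Assume $R_1(i)\neq0$ for $2\le i\le I-1$, $R_2(j)\neq0$ for $2\le j\le J-1$, and that $\alpha,\beta\in\mathbb R$ satisfy $(\alpha+1)R_1(I-1)+(\eta_{1,I-1}^n-\epsilon_1)\neq0$ and $(\beta-1)R_2(2)+(\eta_{2,2}^n+\epsilon_2)\neq0$. Let $(e_1^m,e_2^m)_{m\ge0}$ be the error iterates of the linearized implicit Schwarz iteration for the Burgers equations with the Robin-type (optimized) interface condition defined below. Then, with $$\bar\rho=-\frac{(\alpha+1)(\eta_{2,2}^n+\epsilon_2)-R_2(2)}{(\alpha+1)R_1(I-1)+\eta_{1,I-1}^n-\epsilon_1}\cdot\frac{(\beta-1)(\eta_{1,I-1}^n-\epsilon_1)-R_1(I-1)}{(\beta-1)R_2(2)+\eta_{2,2}^n+\epsilon_2},$$ one has, for every $m\ge1$, $e_{1,i}^{m+2}=\bar\rho\,e_{1,i}^m$ for all $1\le i\le I$ and $e_{2,j}^{m+2}=\bar\rho\,e_{2,j}^m$ for all $1\le j\le J$.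
   Context: Setting (implicit scheme, node-dependent linearized advection). Integers $I,J\ge3$; grid 1 has nodes $1,\dots,I$, grid 2 has nodes $1,\dots,J$, with node $I-1$ of grid 1 coinciding with node 1 of grid 2 and node $I$ of grid 1 coinciding with node 2 of grid 2. Real constants $\epsilon_k,\gamma_k$ and real numbers $\eta_{1,i}^n$ ($2\le i\le I-1$), $\eta_{2,j}^n$ ($2\le j\le J-1$) are given. Define recursively $R_1(2)=1+2\epsilon_1+\gamma_1$, $R_1(i)=1+2\epsilon_1+\gamma_1+\dfrac{(\eta_{1,i-1}^n-\epsilon_1)(\eta_{1,i}^n+\epsilon_1)}{R_1(i-1)}$ for $i=3,\dots,I-1$; $R_2(J-1)=1+2\epsilon_2+\gamma_2$, $R_2(j)=1+2\epsilon_2+\gamma_2+\dfrac{(\eta_{2,j}^n-\epsilon_2)(\eta_{2,j+1}^n+\epsilon_2)}{R_2(j+1)}$ for $j=J-2,\dots,2$. Error iteration with optimized interface condition: $e_1^0\in\mathbb R^I$, $e_2^0\in\mathbb R^J$ arbitrary; for $m\ge1$: $e_{1,1}^m=0$; $-(\eta_{1,i}^n+\epsilon_1)e_{1,i-1}^m+(1+2\epsilon_1+\gamma_1)e_{1,i}^m+(\eta_{1,i}^n-\epsilon_1)e_{1,i+1}^m=0$ for $2\le i\le I-1$; $(e_{1,I}^m-e_{1,I-1}^m)+\alpha e_{1,I}^m=(e_{2,2}^{m-1}-e_{2,1}^{m-1})+\alpha e_{2,2}^{m-1}$; $e_{2,J}^m=0$; $-(\eta_{2,j}^n+\epsilon_2)e_{2,j-1}^m+(1+2\epsilon_2+\gamma_2)e_{2,j}^m+(\eta_{2,j}^n-\epsilon_2)e_{2,j+1}^m=0$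 for $2\le j\le J-1$; $(e_{2,2}^m-e_{2,1}^m)+\beta e_{2,1}^m=(e_{1,I}^{m-1}-e_{1,I-1}^{m-1})+\beta e_{1,I-1}^{m-1}$. *)

(* Defs.v *)
From Stdlib Require Import Reals.
Open Scope R_scope.

(* Node-dependent coefficients: eta1 i = eta_{1,i}^n, eta2 j = eta_{2,j}^n. *)

(* R_1(2+k) by recursion on k:
   R_1(2) = 1+2eps1+gam1,
   R_1(i) = 1+2eps1+gam1 + (eta_{1,i-1}-eps1)(eta_{1,i}+eps1)/R_1(i-1). *)
Fixpoint Rrec1_aux (eps1 gam1 : R) (eta1 : nat -> R) (k : nat) : R :=
  match k with
  | O => 1 + 2 * eps1 + gam1
  | S k' => 1 + 2 * eps1 + gam1
            + (eta1 (k + 1)%nat - eps1) * (eta1 (k + 2)%nat + eps1)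
              / Rrec1_aux eps1 gam1 eta1 k'
  end.

Definition Rrec1 (eps1 gam1 : R) (eta1 : nat -> R) (i : nat) : R :=
  Rrec1_aux eps1 gam1 eta1 (i - 2).

(* R_2(J-1-k) by recursion on k:
   R_2(J-1) = 1+2eps2+gam2,
   R_2(j) = 1+2eps2+gam2 + (eta_{2,j}-eps2)(eta_{2,j+1}+eps2)/R_2(j+1). *)
Fixpoint Rrec2_aux (J : nat) (eps2 gam2 : R) (eta2 : nat -> R) (k : nat) : R :=
  match k with
  | O => 1 + 2 * eps2 + gam2
  | S k' => 1 + 2 * eps2 + gam2
            + (eta2 (J - 1 - k)%nat - eps2) * (eta2 (J - k)%nat + eps2)
              / Rrec2_aux J eps2 gam2 eta2 k'
  end.

Definition Rrec2 (J : nat) (eps2 gam2 : R) (eta2 : nat -> R) (j : nat) : R :=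
  Rrec2_aux J eps2 gam2 eta2 (J - 1 - j).

(* The error iteration with the optimized (Robin) interface condition;
   e1 m i = e_{1,i}^m (1 <= i <= I), e2 m j = e_{2,j}^m (1 <= j <= J).
   e^0 is arbitrary; the equations are imposed for every m >= 1. *)
Definition schwarz_error_iter (I J : nat) (eps1 gam1 eps2 gam2 alpha beta : R)
  (eta1 eta2 : nat -> R) (e1 e2 : nat -> nat -> R) : Prop :=
  forall m : nat, (1 <= m)%nat ->
    e1 m 1%nat = 0 /\
    (forall i : nat, (2 <= i <= I - 1)%nat ->
       - (eta1 i + eps1) * e1 m (i - 1)%nat + (1 + 2 * eps1 + gam1) * e1 m i
       + (eta1 i - eps1) * e1 m (i + 1)%nat = 0) /\
    (e1 m I - e1 m (I - 1)%nat) + alpha * e1 m I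
      = (e2 (m - 1)%nat 2%nat - e2 (m - 1)%nat 1%nat) + alpha * e2 (m - 1)%nat 2%nat /\
    e2 m J = 0 /\
    (forall j : nat, (2 <= j <= J - 1)%nat ->
       - (eta2 j + eps2) * e2 m (j - 1)%nat + (1 + 2 * eps2 + gam2) * e2 m j
       + (eta2 j - eps2) * e2 m (j + 1)%nat = 0) /\
    (e2 m 2%nat - e2 m 1%nat) + beta * e2 m 1%nat
      = (e1 (m - 1)%nat I - e1 (m - 1)%nat (I - 1)%nat) + beta * e1 (m - 1)%nat (I - 1)%nat.

(* Main.v *)
Require Import Defs.
From Stdlib Require Import Reals Lra Lia.
Open Scope R_scope.

Lemma elim1 (I : nat) (eps1 gam1 : R) (eta1 : nat -> R) (x : nat -> R) :
  (forall i : nat, (2 <= i <= I - 1)%nat -> Rrec1 eps1 gam1 eta1 i <> 0) ->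
  x 1%nat = 0 ->
  (forall i : nat, (2 <= i <= I - 1)%nat ->
       - (eta1 i + eps1) * x (i - 1)%nat + (1 + 2 * eps1 + gam1) * x i
       + (eta1 i - eps1) * x (i + 1)%nat = 0) ->
  forall i, (2 <= i <= I - 1)%nat ->
    Rrec1 eps1 gam1 eta1 i * x i + (eta1 i - eps1) * x (i + 1)%nat = 0.
Proof.
  intros HR Hx1 Heq.
  assert (H : forall k, (k + 2 <= I - 1)%nat ->
    Rrec1 eps1 gam1 eta1 (k+2) * x (k+2)%nat + (eta1 (k+2)%nat - eps1) * x (k + 2 + 1)%nat = 0).
  { induction k as [|k IH]; intros Hk.
    - simpl. unfold Rrec1; simpl. pose proof (Heq 2%nat ltac:(lia)) as E. simpl in E.
      rewrite Hx1 in E. lra.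
    - assert (Hn : Rrec1 eps1 gam1 eta1 (k+2) <> 0) by (apply HR; lia).
      specialize (IH ltac:(lia)).
      pose proof (Heq (S k + 2)%nat ltac:(lia)) as E.
      replace (S k + 2 - 1)%nat with (k+2)%nat in E by lia.
      replace (S k + 2)%nat with (k + 2 + 1)%nat in E |- * by lia.
      assert (Hr : Rrec1 eps1 gam1 eta1 (k + 2 + 1) = 1 + 2 * eps1 + gam1 +
         (eta1 (k+2)%nat - eps1) * (eta1 (k+2+1)%nat + eps1) / Rrec1 eps1 gam1 eta1 (k+2)).
      { unfold Rrec1. replace (k+2+1-2)%nat with (S k) by lia.
        replace (k+2-2)%nat with k by lia. simpl Rrec1_aux at 1.
        replace (S (k + 1))%nat with (k+2)%nat by lia.
        replace (S (k + 2))%nat with (k+2+1)%nat by lia. reflexivity. }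
      rewrite Hr.
      assert (Hxk : x (k+2)%nat = - (eta1 (k+2)%nat - eps1) * x (k+2+1)%nat / Rrec1 eps1 gam1 eta1 (k+2)).
      { field_simplify; [|exact Hn]. apply (Rmult_eq_reg_l (Rrec1 eps1 gam1 eta1 (k+2))); [|exact Hn].
        field_simplify; [|exact Hn]. lra. }
      rewrite Hxk in E. rewrite <- E. field. exact Hn. }
  intros i Hi. replace i with (i - 2 + 2)%nat by lia. apply H. lia.
Qed.

Lemma elim2 (J : nat) (eps2 gam2 : R) (eta2 : nat -> R) (x : nat -> R) :
  (3 <= J)%nat ->
  (forall j : nat, (2 <= j <= J - 1)%nat -> Rrec2 J eps2 gam2 eta2 j <> 0) ->
  x J = 0 ->
  (forall j : nat, (2 <= j <= J - 1)%nat ->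
       - (eta2 j + eps2) * x (j - 1)%nat + (1 + 2 * eps2 + gam2) * x j
       + (eta2 j - eps2) * x (j + 1)%nat = 0) ->
  forall j, (2 <= j <= J - 1)%nat ->
    - (eta2 j + eps2) * x (j - 1)%nat + Rrec2 J eps2 gam2 eta2 j * x j = 0.
Proof.
  intros HJ HR HxJ Heq.
  assert (H : forall k, (k <= J - 3)%nat ->
    - (eta2 (J-1-k)%nat + eps2) * x (J-1-k-1)%nat + Rrec2 J eps2 gam2 eta2 (J-1-k) * x (J-1-k)%nat = 0).
  { induction k as [|k IH]; intros Hk.
    - unfold Rrec2. replace (J-1-(J-1-0))%nat with 0%nat by lia. simpl Rrec2_aux.
      pose proof (Heq (J-1-0)%nat ltac:(lia)) as E.
      replace (J-1-0+1)%nat with J in E by lia. rewrite HxJ in E. lra.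
    - assert (Hn : Rrec2 J eps2 gam2 eta2 (J-1-k) <> 0) by (apply HR; lia).
      specialize (IH ltac:(lia)).
      pose proof (Heq (J-1-S k)%nat ltac:(lia)) as E.
      replace (J-1-S k+1)%nat with (J-1-k)%nat in E by lia.
      replace (J-1-k-1)%nat with (J-1-S k)%nat in IH by lia.
      assert (Hr : Rrec2 J eps2 gam2 eta2 (J-1-S k) = 1 + 2 * eps2 + gam2 +
         (eta2 (J-1-S k)%nat - eps2) * (eta2 (J-1-k)%nat + eps2) / Rrec2 J eps2 gam2 eta2 (J-1-k)).
      { unfold Rrec2. replace (J-1-(J-1-S k))%nat with (S k) by lia.
        replace (J-1-(J-1-k))%nat with k by lia. simpl Rrec2_aux at 1.
        replace (J - S k)%nat with (J-1-k)%nat by lia. reflexivity. }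
      rewrite Hr.
      assert (Hxk : x (J-1-k)%nat = (eta2 (J-1-k)%nat + eps2) * x (J-1-S k)%nat / Rrec2 J eps2 gam2 eta2 (J-1-k)).
      { apply (Rmult_eq_reg_l (Rrec2 J eps2 gam2 eta2 (J-1-k))); [|exact Hn].
        field_simplify; [|exact Hn]. lra. }
      rewrite Hxk in E. rewrite <- E. field. exact Hn. }
  intros j Hj. replace j with (J - 1 - (J - 1 - j))%nat by lia. apply H. lia.
Qed.

Lemma uniq1 (I : nat) (eps1 gam1 : R) (eta1 : nat -> R) (x : nat -> R) :
  (3 <= I)%nat ->
  (forall i : nat, (2 <= i <= I - 1)%nat -> Rrec1 eps1 gam1 eta1 i <> 0) ->
  x 1%nat = 0 ->
  (forall i : nat, (2 <= i <= I - 1)%nat ->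
       - (eta1 i + eps1) * x (i - 1)%nat + (1 + 2 * eps1 + gam1) * x i
       + (eta1 i - eps1) * x (i + 1)%nat = 0) ->
  x I = 0 -> forall i, (1 <= i <= I)%nat -> x i = 0.
Proof.
  intros HI HR Hx1 Heq HxI.
  pose proof (elim1 I eps1 gam1 eta1 x HR Hx1 Heq) as El.
  assert (H : forall k, (k <= I - 2)%nat -> x (I - k)%nat = 0).
  { induction k as [|k IH]; intros Hk.
    - now replace (I-0)%nat with I by lia.
    - specialize (IH ltac:(lia)). pose proof (El (I - S k)%nat ltac:(lia)) as E.
      replace (I - S k + 1)%nat with (I-k)%nat in E by lia. rewrite IH in E.
      assert (Hn : Rrec1 eps1 gam1 eta1 (I - S k) <> 0) by (apply HR; lia).
      apply (Rmult_eq_reg_l (Rrec1 eps1 gam1 eta1 (I - S k))); [lra|exact Hn]. }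
  intros i Hi. destruct (Nat.eq_dec i 1) as [->|Hne]; [exact Hx1|].
  replace i with (I - (I - i))%nat by lia. apply H. lia.
Qed.

Lemma uniq2 (J : nat) (eps2 gam2 : R) (eta2 : nat -> R) (x : nat -> R) :
  (3 <= J)%nat ->
  (forall j : nat, (2 <= j <= J - 1)%nat -> Rrec2 J eps2 gam2 eta2 j <> 0) ->
  x J = 0 ->
  (forall j : nat, (2 <= j <= J - 1)%nat ->
       - (eta2 j + eps2) * x (j - 1)%nat + (1 + 2 * eps2 + gam2) * x j
       + (eta2 j - eps2) * x (j + 1)%nat = 0) ->
  x 1%nat = 0 -> forall j, (1 <= j <= J)%nat -> x j = 0.
Proof.
  intros HJ HR HxJ Heq Hx1.
  pose proof (elim2 J eps2 gam2 eta2 x HJ HR HxJ Heq) as El.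
  assert (H : forall k, (k + 1 <= J - 1)%nat -> x (k + 1)%nat = 0).
  { induction k as [|k IH]; intros Hk.
    - exact Hx1.
    - specialize (IH ltac:(lia)). pose proof (El (S k + 1)%nat ltac:(lia)) as E.
      replace (S k + 1 - 1)%nat with (k+1)%nat in E by lia. rewrite IH in E.
      assert (Hn : Rrec2 J eps2 gam2 eta2 (S k + 1) <> 0) by (apply HR; lia).
      apply (Rmult_eq_reg_l (Rrec2 J eps2 gam2 eta2 (S k + 1))); [lra|exact Hn]. }
  intros j Hj. destruct (Nat.eq_dec j J) as [->|Hne]; [exact HxJ|].
  replace j with (j - 1 + 1)%nat by lia. apply H. lia.
Qed.

Lemma stepA (r1 r2 h g al a x y b : R) :
  r1 * x + h * a = 0 -> - g * b + r2 * y = 0 ->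
  (a - x) + al * a = (y - b) + al * y ->
  a * ((al + 1) * r1 + h) * r2 = b * r1 * ((al + 1) * g - r2).
Proof.
  intros E1 E2 E3.
  assert (D : a * ((al + 1) * r1 + h) * r2 - b * r1 * ((al + 1) * g - r2)
     = r1 * r2 * (((a - x) + al * a) - ((y - b) + al * y)) + r2 * (r1 * x + h * a)
       + r1 * (al + 1) * (- g * b + r2 * y)) by ring.
  rewrite E1, E2, E3 in D. lra.
Qed.

Lemma stepB (r1 r2 h g be a x y b : R) :
  r1 * x + h * a = 0 -> - g * b + r2 * y = 0 ->
  (y - b) + be * b = (a - x) + be * x ->
  b * r1 * ((be - 1) * r2 + g) = r2 * (r1 - (be - 1) * h) * a.
Proof.
  intros E1 E2 E4.
  assert (D : b * r1 * ((be - 1) * r2 + g) - r2 * (r1 - (be - 1) * h) * a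
     = r1 * r2 * (((y - b) + be * b) - ((a - x) + be * x)) - r1 * (- g * b + r2 * y)
       + r2 * (be - 1) * (r1 * x + h * a)) by ring.
  rewrite E1, E2, E4 in D. lra.
Qed.

Lemma combine (r1 r2 h g al be a2 b1 a0 : R) :
  r1 <> 0 -> r2 <> 0 -> (al + 1) * r1 + h <> 0 -> (be - 1) * r2 + g <> 0 ->
  a2 * ((al + 1) * r1 + h) * r2 = b1 * r1 * ((al + 1) * g - r2) ->
  b1 * r1 * ((be - 1) * r2 + g) = r2 * (r1 - (be - 1) * h) * a0 ->
  a2 = - (((al + 1) * g - r2) / ((al + 1) * r1 + h)) *
        (((be - 1) * h - r1) / ((be - 1) * r2 + g)) * a0.
Proof.
  intros H1 H2 HP HQ EA EB.
  assert (Ha : a2 = b1 * r1 * ((al + 1) * g - r2) / (((al + 1) * r1 + h) * r2)).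
  { rewrite <- EA. field. auto. }
  assert (Hb : b1 = r2 * (r1 - (be - 1) * h) * a0 / (r1 * ((be - 1) * r2 + g))).
  { rewrite <- EB. field. auto. }
  rewrite Ha, Hb. field. auto.
Qed.

Lemma combine2 (r1 r2 h g al be b2 a1 b0 : R) :
  r1 <> 0 -> r2 <> 0 -> (al + 1) * r1 + h <> 0 -> (be - 1) * r2 + g <> 0 ->
  a1 * ((al + 1) * r1 + h) * r2 = b0 * r1 * ((al + 1) * g - r2) ->
  b2 * r1 * ((be - 1) * r2 + g) = r2 * (r1 - (be - 1) * h) * a1 ->
  b2 = - (((al + 1) * g - r2) / ((al + 1) * r1 + h)) *
        (((be - 1) * h - r1) / ((be - 1) * r2 + g)) * b0.
Proof.
  intros H1 H2 HP HQ EA EB.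
  assert (Ha : a1 = b0 * r1 * ((al + 1) * g - r2) / (((al + 1) * r1 + h) * r2)).
  { rewrite <- EA. field. auto. }
  assert (Hb : b2 = r2 * (r1 - (be - 1) * h) * a1 / (r1 * ((be - 1) * r2 + g))).
  { rewrite <- EB. field. auto. }
  rewrite Hb, Ha. field. auto.
Qed.
Theorem proposition5p4 (I J : nat) (eps1 gam1 eps2 gam2 alpha beta : R)
  (eta1 eta2 : nat -> R) (e1 e2 : nat -> nat -> R) :
  (3 <= I)%nat -> (3 <= J)%nat ->
  (forall i : nat, (2 <= i <= I - 1)%nat -> Rrec1 eps1 gam1 eta1 i <> 0) ->
  (forall j : nat, (2 <= j <= J - 1)%nat -> Rrec2 J eps2 gam2 eta2 j <> 0) ->
  (alpha + 1) * Rrec1 eps1 gam1 eta1 (I - 1)%nat + (eta1 (I - 1)%nat - eps1) <> 0 ->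
  (beta - 1) * Rrec2 J eps2 gam2 eta2 2%nat + (eta2 2%nat + eps2) <> 0 ->
  schwarz_error_iter I J eps1 gam1 eps2 gam2 alpha beta eta1 eta2 e1 e2 ->
  let rho :=
    - (((alpha + 1) * (eta2 2%nat + eps2) - Rrec2 J eps2 gam2 eta2 2%nat)
        / ((alpha + 1) * Rrec1 eps1 gam1 eta1 (I - 1)%nat + eta1 (I - 1)%nat - eps1))
    * (((beta - 1) * (eta1 (I - 1)%nat - eps1) - Rrec1 eps1 gam1 eta1 (I - 1)%nat)
        / ((beta - 1) * Rrec2 J eps2 gam2 eta2 2%nat + eta2 2%nat + eps2)) in
  forall m : nat, (1 <= m)%nat ->
    (forall i : nat, (1 <= i <= I)%nat -> e1 (m + 2)%nat i = rho * e1 m i) /\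
    (forall j : nat, (1 <= j <= J)%nat -> e2 (m + 2)%nat j = rho * e2 m j).
Proof.
  intros HI HJ HR1 HR2 HP HQ Hs rho m Hm.
  set (r1 := Rrec1 eps1 gam1 eta1 (I - 1)%nat) in *.
  set (r2 := Rrec2 J eps2 gam2 eta2 2%nat) in *.
  set (h := eta1 (I - 1)%nat - eps1) in *.
  set (g := eta2 2%nat + eps2) in *.
  assert (Hr1 : r1 <> 0) by (apply HR1; lia).
  assert (Hr2 : r2 <> 0) by (apply HR2; lia).
  assert (Hrho : rho = - (((alpha + 1) * g - r2) / ((alpha + 1) * r1 + h)) *
        (((beta - 1) * h - r1) / ((beta - 1) * r2 + g))).
  { unfold rho, h, g. f_equal; [f_equal; f_equal|f_equal]; ring. }
  assert (F1 : forall n, (1 <= n)%nat -> r1 * e1 n (I-1)%nat + h * e1 n I = 0).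
  { intros n Hn. destruct (Hs n Hn) as (A1 & A2 & _).
    pose proof (elim1 I eps1 gam1 eta1 (e1 n) HR1 A1 A2 (I-1)%nat ltac:(lia)) as E.
    replace (I-1+1)%nat with I in E by lia. exact E. }
  assert (F2 : forall n, (1 <= n)%nat -> - g * e2 n 1%nat + r2 * e2 n 2%nat = 0).
  { intros n Hn. destruct (Hs n Hn) as (_ & _ & _ & A1 & A2 & _).
    pose proof (elim2 J eps2 gam2 eta2 (e2 n) HJ HR2 A1 A2 2%nat ltac:(lia)) as E.
    exact E. }
  assert (FA : forall n, (2 <= n)%nat ->
     e1 n I * ((alpha + 1) * r1 + h) * r2 = e2 (n-1)%nat 1%nat * r1 * ((alpha + 1) * g - r2)).
  { intros n Hn. destruct (Hs n ltac:(lia)) as (_ & _ & A3 & _).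
    eapply stepA; [apply F1; lia | apply F2; lia | exact A3]. }
  assert (FB : forall n, (2 <= n)%nat ->
     e2 n 1%nat * r1 * ((beta - 1) * r2 + g) = r2 * (r1 - (beta - 1) * h) * e1 (n-1)%nat I).
  { intros n Hn. destruct (Hs n ltac:(lia)) as (_ & _ & _ & _ & _ & A6).
    eapply stepB; [apply F1; lia | apply F2; lia | exact A6]. }
  assert (Ha : e1 (m+2)%nat I = rho * e1 m I).
  { rewrite Hrho. eapply combine; eauto.
    - apply FA; lia.
    - replace (m+2-1)%nat with (m+1)%nat by lia. pose proof (FB (m+1)%nat ltac:(lia)) as E.
      replace (m+1-1)%nat with m in E by lia. exact E. }
  assert (Hb : e2 (m+2)%nat 1%nat = rho * e2 m 1%nat).
  { rewrite Hrho. eapply combine2; eauto.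
    - pose proof (FA (m+1)%nat ltac:(lia)) as E.
      replace (m+1-1)%nat with m in E by lia. exact E.
    - pose proof (FB (m+2)%nat ltac:(lia)) as E.
      replace (m+2-1)%nat with (m+1)%nat in E by lia. exact E. }
  destruct (Hs (m+2)%nat ltac:(lia)) as (B1 & B2 & _ & B4 & B5 & _).
  destruct (Hs m Hm) as (C1 & C2 & _ & C4 & C5 & _).
  split.
  - intros i Hi.
    enough (e1 (m+2)%nat i - rho * e1 m i = 0) by lra.
    apply (uniq1 I eps1 gam1 eta1 (fun k => e1 (m+2)%nat k - rho * e1 m k) HI HR1); auto.
    + simpl. rewrite B1, C1. ring.
    + intros k Hk. simpl. specialize (B2 k Hk). specialize (C2 k Hk).
      transitivity (- (eta1 k + eps1) * e1 (m + 2)%nat (k - 1)%nat + (1 + 2 * eps1 + gam1) * e1 (m + 2)%nat k +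
       (eta1 k - eps1) * e1 (m + 2)%nat (k + 1)%nat - rho * (- (eta1 k + eps1) * e1 m (k - 1)%nat + (1 + 2 * eps1 + gam1) * e1 m k +
       (eta1 k - eps1) * e1 m (k + 1)%nat)); [ring|]. rewrite B2, C2. ring.
    + simpl. rewrite Ha. ring.
  - intros j Hj.
    enough (e2 (m+2)%nat j - rho * e2 m j = 0) by lra.
    apply (uniq2 J eps2 gam2 eta2 (fun k => e2 (m+2)%nat k - rho * e2 m k) HJ HR2); auto.
    + simpl. rewrite B4, C4. ring.
    + intros k Hk. simpl. specialize (B5 k Hk). specialize (C5 k Hk).
      transitivity (- (eta2 k + eps2) * e2 (m + 2)%nat (k - 1)%nat + (1 + 2 * eps2 + gam2) * e2 (m + 2)%nat k +
       (eta2 k - eps2) * e2 (m + 2)%nat (k + 1)%nat - rho * (- (eta2 k + eps2) * e2 m (k - 1)%nat + (1 + 2 * eps2 + gam2) * e2 m k +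
       (eta2 k - eps2) * e2 m (k + 1)%nat)); [ring|]. rewrite B5, C5. ring.
    + simpl. rewrite Hb. ring.
Qed.
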